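(* Let $h$ be the Hahn sequence space, let $\Delta:h\to h$ be the forward difference operator $(\Delta x)_k=x_k-x_{k+1}$, and let $\Delta^*:h^*\to h^*$ be its adjoint. Then $\sigma_r(\Delta,h)=\sigma_p(\Delta^*,h^* )$.
   Context: Sequences are indexed by $\mathbb{N}=\{0,1,2,\dots\}$. The Hahn sequence space is $h=\{x=(x_k):\sum_{k=1}^\infty k|x_k-x_{k+1}|<\infty \text{ and } \lim_{k\to\infty}x_k=0\}$, a Banach space with norm $\|x\|_h=\sum_k k|x_k-x_{k+1}|+\sup_k|x_k|$. $\Delta$ is given by the matrix with $1$ on the main diagonal and $-1$ on the first superdiagonal. $h^*$ is the Banach dual of $h$ and $(\Delta^*f)(x)=f(\Delta x)$. For a bounded operator $T$ on a Banach space $X$: $\sigma_p(T,X)$ is the set of $\alpha\in\mathbb{C}$ with $\alpha I-T$ not injective; the residual spectrum $\sigma_r(T,X)$ is the set of $\alpha\in\mathbb{C}$ such that $\alpha I-T$ is injective but its range $R(\alpha I-T)$ is not dense in $X$. *)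

(* Defs.v *)
From Stdlib Require Import Reals.
From Coquelicot Require Import Coquelicot.
Open Scope R_scope.

Definition cseq := nat -> C.

Definition sadd (x y : cseq) : cseq := fun k => Cplus (x k) (y k).
Definition ssub (x y : cseq) : cseq := fun k => Cminus (x k) (y k).
Definition sscal (a : C) (x : cseq) : cseq := fun k => Cmult a (x k).

(* The Hahn sequence space h:
   sum_{k>=1} k |x_k - x_{k+1}| < oo  and  x_k -> 0.
   (The k = 0 term of the series below is 0, so summing from 0 is harmless.) *)
Definition in_hahn (x : cseq) : Prop :=
  ex_series (fun k => INR k * Cmod (Cminus (x k) (x (S k))))
  /\ is_lim_seq (fun k => Cmod (x k)) 0.

Definition hnorm (x : cseq) : R :=
  Series (fun k => INR k * Cmod (Cminus (x k) (x (S k))))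
  + real (Sup_seq (fun k => Cmod (x k))).

Definition Delta (x : cseq) : cseq := fun k => Cminus (x k) (x (S k)).

Definition aImDelta (a : C) (x : cseq) : cseq := ssub (sscal a x) (Delta x).

(* h^*: bounded linear functionals on h (only their values on h matter). *)
Definition in_hdual (f : cseq -> C) : Prop :=
  (forall x y, in_hahn x -> in_hahn y -> f (sadd x y) = Cplus (f x) (f y))
  /\ (forall a x, in_hahn x -> f (sscal a x) = Cmult a (f x))
  /\ (exists M : R, forall x, in_hahn x -> Cmod (f x) <= M * hnorm x).

Definition hdual_eq (f g : cseq -> C) : Prop := forall x, in_hahn x -> f x = g x.

Definition Delta_adj (f : cseq -> C) : cseq -> C := fun x => f (Delta x).

Definition aImDelta_adj (a : C) (f : cseq -> C) : cseq -> C :=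
  fun x => Cminus (Cmult a (f x)) (Delta_adj f x).

Definition injective_on_h (T : cseq -> cseq) : Prop :=
  forall x y, in_hahn x -> in_hahn y -> T x = T y -> x = y.

Definition range_dense_in_h (T : cseq -> cseq) : Prop :=
  forall y, in_hahn y -> forall eps : R, 0 < eps ->
    exists x, in_hahn x /\ hnorm (ssub (T x) y) < eps.

Definition sigma_r_Delta_h (a : C) : Prop :=
  injective_on_h (aImDelta a) /\ ~ range_dense_in_h (aImDelta a).

Definition sigma_p_Delta_adj_hdual (a : C) : Prop :=
  ~ (forall f g, in_hdual f -> in_hdual g ->
       hdual_eq (aImDelta_adj a f) (aImDelta_adj a g) -> hdual_eq f g).

(* Main.v *)
Require Import Defs.
From Stdlib Require Import Reals Lra Lia Classical FunctionalExtensionality.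
From Coquelicot Require Import Coquelicot.

Lemma ex_series_zero : ex_series (fun _ : nat => 0%R).
Proof.
  apply ex_series_ext with (a := fun n => ((/2)^n * 0)%R).
  - intros; apply Rmult_0_r.
  - apply ex_series_scal_r, ex_series_geom. rewrite Rabs_pos_eq; lra.
Qed.

Lemma in_hahn_fin : forall (z : cseq) N, (forall k, (N <= k)%nat -> z k = RtoC 0) -> in_hahn z.
Proof.
  intros z N Hz. split.
  - apply (ex_series_incr_n _ N).
    apply ex_series_ext with (a := fun _ => 0%R); [|apply ex_series_zero].
    intros n. rewrite !Hz by lia. unfold Cminus. rewrite Cplus_opp_r, Cmod_0. symmetry; apply Rmult_0_r.
  - apply (is_lim_seq_incr_n _ N).
    apply is_lim_seq_ext with (u := fun _ => 0%R); [|apply is_lim_seq_const].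
    intros n. rewrite Hz by lia. now rewrite Cmod_0.
Qed.

Lemma in_hahn_add : forall x y, in_hahn x -> in_hahn y -> in_hahn (sadd x y).
Proof.
  intros x y [Hx1 Hx2] [Hy1 Hy2]. split.
  - apply (@ex_series_le R_AbsRing R_CompleteNormedModule) with (b := fun k => (INR k * Cmod (Cminus (x k) (x (S k))) + INR k * Cmod (Cminus (y k) (y (S k))))%R).
    + intros n. unfold norm; simpl. unfold abs; simpl. rewrite Rabs_pos_eq.
      2: apply Rmult_le_pos; [apply pos_INR|apply Cmod_ge_0].
      unfold sadd. rewrite <- Rmult_plus_distr_l. apply Rmult_le_compat_l; [apply pos_INR|].
      replace (Cminus (Cplus (x n) (y n)) (Cplus (x (S n)) (y (S n)))) with
        (Cplus (Cminus (x n) (x (S n))) (Cminus (y n) (y (S n)))) by ring.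
      apply Cmod_triangle.
    + apply (ex_series_plus _ _ Hx1 Hy1).
  - apply is_lim_seq_le_le with (u := fun _ => 0%R) (w := fun k => (Cmod (x k) + Cmod (y k))%R).
    + intros n. split; [apply Cmod_ge_0|apply Cmod_triangle].
    + apply is_lim_seq_const.
    + replace (Finite 0) with (Finite (0+0)) by (f_equal; ring).
      now apply is_lim_seq_plus'.
Qed.

Lemma in_hahn_scal : forall c x, in_hahn x -> in_hahn (sscal c x).
Proof.
  intros c x [Hx1 Hx2]. split.
  - apply ex_series_ext with (a := fun k => scal (Cmod c) (INR k * Cmod (Cminus (x k) (x (S k))))%R).
    + intros n. unfold scal; simpl. unfold mult; simpl. unfold sscal.
      replace (Cminus (Cmult c (x n)) (Cmult c (x (S n)))) with (Cmult c (Cminus (x n) (x (S n)))) by ring.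
      rewrite Cmod_mult. ring.
    + now apply (@ex_series_scal_l R_AbsRing R_NormedModule).
  - apply is_lim_seq_ext with (u := fun k => (Cmod c * Cmod (x k))%R).
    + intros n. unfold sscal. now rewrite Cmod_mult.
    + replace (Finite 0) with (Rbar_mult (Cmod c) 0) by (simpl; f_equal; ring).
      now apply is_lim_seq_scal_l.
Qed.

Lemma Series_nonneg : forall a, ex_series a -> (forall n, 0 <= a n) -> 0 <= Series a.
Proof.
  intros a Ha Hp.
  assert (H0 : Series (fun _ : nat => 0) = 0).
  { rewrite <- (Series_ext (fun n => 0 * a n)) by (intros; ring).
    rewrite Series_scal_l; ring. }
  rewrite <- H0. apply Series_le; auto. intros n; split; [lra|auto].
Qed.

Lemma tail_small : forall y, in_hahn y -> forall eps, 0 < eps -> exists N, forall v : cseq,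
  (forall k, Cmod (Cminus (v k) (v (S k))) = if Nat.ltb k N then 0 else Cmod (Cminus (y k) (y (S k)))) ->
  (forall k, Cmod (v k) = Cmod (if Nat.ltb k N then y N else y k)) ->
  0 <= hnorm v < eps.
Proof.
  intros y [Hy1 Hy2] eps Heps.
  set (a := fun k => INR k * Cmod (Cminus (y k) (y (S k)))).
  assert (Hs : is_lim_seq (sum_n a) (Series a)) by exact (Series_correct a Hy1).
  apply is_lim_seq_spec in Hs. apply is_lim_seq_spec in Hy2.
  assert (He2 : 0 < eps/2) by lra.
  destruct (Hs (mkposreal _ He2)) as [N1 HN1].
  destruct (Hy2 (mkposreal _ He2)) as [N2 HN2]. simpl in HN1, HN2.
  exists (S (max N1 N2)). intros v Hv1 Hv2.
  set (N := S (max N1 N2)) in *.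
  assert (Hapos : forall n, 0 <= a n).
  { intros n; unfold a; apply Rmult_le_pos; [apply pos_INR|apply Cmod_ge_0]. }
  assert (Htail_ex : ex_series (fun k => a (N + k)%nat)) by (apply ex_series_incr_n; exact Hy1).
  assert (HS : Series (fun k => INR k * Cmod (Cminus (v k) (v (S k)))) = Series (fun k => a (N + k)%nat)).
  { rewrite (Series_incr_n_aux _ N).
    - apply Series_ext. intros n. rewrite Hv1.
      destruct (Nat.ltb_spec (N+n) N); [lia|reflexivity].
    - intros k Hk. rewrite Hv1. destruct (Nat.ltb_spec k N); [ring|lia]. }
  assert (Hincr := Series_incr_n a N ltac:(unfold N; lia) Hy1).
  assert (HN1' := HN1 (Init.Nat.pred N) ltac:(unfold N; simpl; lia)).
  rewrite sum_n_Reals in HN1'.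
  assert (Hpos1 : 0 <= Series (fun k => a (N + k)%nat)).
  { apply Series_nonneg; auto. }
  assert (Hlt1 : Series (fun k => a (N + k)%nat) < eps/2).
  { rewrite Rabs_minus_sym in HN1'. apply Rabs_def2 in HN1'. lra. }
  assert (Hvb : forall k, Cmod (v k) < eps/2).
  { intros k. rewrite Hv2. destruct (Nat.ltb_spec k N).
    - specialize (HN2 N ltac:(unfold N; lia)). rewrite Rminus_0_r, Rabs_pos_eq in HN2 by apply Cmod_ge_0. exact HN2.
    - specialize (HN2 k ltac:(unfold N in *; lia)). rewrite Rminus_0_r, Rabs_pos_eq in HN2 by apply Cmod_ge_0. exact HN2. }
  assert (Hup : Rbar_le (Sup_seq (fun k => Cmod (v k))) (eps/2)).
  { apply Rbar_not_lt_le. intros Hlt. apply Sup_seq_minor_lt in Hlt. destruct Hlt as [n Hn].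
    simpl in Hn. specialize (Hvb n). lra. }
  assert (Hlo : Rbar_le (Cmod (v 0%nat)) (Sup_seq (fun k => Cmod (v k)))).
  { apply Sup_seq_minor_le with (n := 0%nat). simpl; lra. }
  unfold hnorm. rewrite HS.
  destruct (Sup_seq (fun k => Cmod (v k))) as [r| |]; simpl in Hup, Hlo; cbn [real]; try contradiction.
  assert (0 <= Cmod (v 0%nat)) by apply Cmod_ge_0. lra.
Qed.

Definition e (n : nat) : cseq := fun k => if Nat.eqb k n then RtoC 1 else RtoC 0.

Lemma e_hahn : forall n, in_hahn (e n).
Proof.
  intros n. apply in_hahn_fin with (N := S n). intros k Hk. unfold e.
  destruct (Nat.eqb_spec k n); [lia|reflexivity].
Qed.

Lemma fin_ind (P : cseq -> Prop) :
  (forall x y, P x -> P y -> P (sadd x y)) ->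
  (forall c x, P x -> P (sscal c x)) ->
  (forall n, P (e n)) ->
  forall N z, (forall k, (N <= k)%nat -> z k = RtoC 0) -> P z.
Proof.
  intros Hadd Hscal He N. induction N as [|N IH]; intros z Hz.
  - replace z with (sscal (RtoC 0) (e 0)).
    + apply Hscal, He.
    + apply functional_extensionality; intros k. unfold sscal. rewrite Hz by lia. ring.
  - set (z' := fun k => if Nat.eqb k N then RtoC 0 else z k).
    replace z with (sadd z' (sscal (z N) (e N))).
    + apply Hadd; [|apply Hscal, He]. apply IH. intros k Hk. unfold z'.
      destruct (Nat.eqb_spec k N); [reflexivity|apply Hz; lia].
    + apply functional_extensionality; intros k. unfold sadd, sscal, z', e.
      destruct (Nat.eqb_spec k N); [subst; ring|ring].
Qed.

Lemma e0_S : forall k, e 0 (S k) = RtoC 0.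
Proof. reflexivity. Qed.
Lemma eS_S : forall n k, e (S n) (S k) = e n k.
Proof. reflexivity. Qed.

Lemma Rzero_of_small : forall r, 0 <= r -> (forall eps, 0 < eps -> r <= eps) -> r = 0.
Proof.
  intros r H0 H. destruct (Rle_lt_or_eq_dec 0 r H0) as [Hp|Hp]; [|auto].
  specialize (H (r/2) ltac:(lra)). lra.
Qed.

Definition approx (y : cseq) (N : nat) : cseq :=
  fun k => if Nat.ltb k N then Cminus (y k) (y N) else RtoC 0.

Lemma approx_fin : forall y N k, (N <= k)%nat -> approx y N k = RtoC 0.
Proof. intros y N k Hk. unfold approx. destruct (Nat.ltb_spec k N); [lia|reflexivity]. Qed.

Lemma approx_conds : forall (y : cseq) N (s : C), (s = RtoC 1 \/ s = RtoC (-1)) ->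
  let v := fun k => Cmult s (Cminus (y k) (approx y N k)) in
  (forall k, Cmod (Cminus (v k) (v (S k))) = if Nat.ltb k N then 0 else Cmod (Cminus (y k) (y (S k)))) /\
  (forall k, Cmod (v k) = Cmod (if Nat.ltb k N then y N else y k)).
Proof.
  intros y N s Hs v.
  assert (Hm : forall c, Cmod (Cmult s c) = Cmod c).
  { intros c. rewrite Cmod_mult. destruct Hs as [-> | ->].
    - rewrite Cmod_R, Rabs_R1. ring.
    - rewrite Cmod_R, Rabs_left by lra. ring. }
  split; intros k; unfold v, approx.
  - destruct (Nat.ltb_spec k N); destruct (Nat.ltb_spec (S k) N).
    + replace (Cminus _ _) with (RtoC 0) by ring. now rewrite Cmod_0.
    + replace (y (S k)) with (y N) by (f_equal; lia).
      replace (Cminus _ _) with (RtoC 0) by ring. now rewrite Cmod_0.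
    + lia.
    + rewrite <- (Hm (Cminus (y k) (y (S k)))). f_equal. ring.
  - destruct (Nat.ltb_spec k N).
    + rewrite <- (Hm (y N)). f_equal. ring.
    + rewrite <- (Hm (y k)). f_equal. ring.
Qed.

Lemma not_sigma_r : forall a, ~ sigma_r_Delta_h a.
Proof.
  intros a [_ Hnd]. apply Hnd. clear Hnd.
  set (RP := fun z => exists x, in_hahn x /\ aImDelta a x = z).
  assert (Hadd : forall x y, RP x -> RP y -> RP (sadd x y)).
  { intros x y [x1 [H1 E1]] [y1 [H2 E2]]. exists (sadd x1 y1). split; [now apply in_hahn_add|].
    subst. apply functional_extensionality; intros k. unfold aImDelta, sadd, ssub, sscal, Defs.Delta. ring. }
  assert (Hscal : forall c x, RP x -> RP (sscal c x)).
  { intros c x [x1 [H1 E1]]. exists (sscal c x1). split; [now apply in_hahn_scal|].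
    subst. apply functional_extensionality; intros k. unfold aImDelta, ssub, sscal, Defs.Delta. ring. }
  assert (He : forall n, RP (e n)).
  { destruct (classic (a = RtoC 1)) as [Ha|Ha].
    - intros n. exists (e (S n)). split; [apply e_hahn|].
      apply functional_extensionality; intros k. unfold aImDelta, ssub, sscal, Defs.Delta.
      rewrite eS_S, Ha. ring.
    - assert (Ha1 : Cminus a (RtoC 1) <> RtoC 0).
      { intros Hc. apply Ha. replace a with (Cplus (Cminus a (RtoC 1)) (RtoC 1)) by ring. rewrite Hc. ring. }
      induction n as [|n IH].
      + exists (sscal (Cinv (Cminus a (RtoC 1))) (e 0)). split; [apply in_hahn_scal, e_hahn|].
        apply functional_extensionality; intros k. unfold aImDelta, ssub, sscal, Defs.Delta.
        rewrite e0_S. field. exact Ha1.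
      + destruct IH as [x [Hx Ex]].
        exists (sadd (sscal (Cinv (Cminus a (RtoC 1))) (e (S n))) (sscal (Copp (Cinv (Cminus a (RtoC 1)))) x)).
        split; [apply in_hahn_add; apply in_hahn_scal; [apply e_hahn|exact Hx]|].
        apply functional_extensionality; intros k.
        assert (Hk := equal_f Ex k). unfold aImDelta, ssub, sscal, Defs.Delta in Hk |- *. unfold sadd, sscal.
        rewrite eS_S. rewrite <- Hk. field. exact Ha1. }
  intros y Hy eps Heps.
  destruct (tail_small y Hy eps Heps) as [N HN].
  assert (HRz : RP (approx y N)) by (apply (fin_ind RP Hadd Hscal He N); apply approx_fin).
  destruct HRz as [x [Hx Ex]]. exists x. split; [exact Hx|]. rewrite Ex.
  destruct (approx_conds y N (RtoC (-1)) (or_intror eq_refl)) as [C1 C2].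
  replace (ssub (approx y N) y) with (fun k => Cmult (RtoC (-1)) (Cminus (y k) (approx y N k))).
  - apply (HN _ C1 C2).
  - apply functional_extensionality; intros k. unfold ssub. ring.
Qed.

Lemma lin_help : forall a p q : C, Cmult a p = Cplus p (Cmult (RtoC (-1)) q) ->
  q = Cmult (Cminus (RtoC 1) a) p.
Proof.
  intros a p q H.
  transitivity (Cplus (Cminus p (Cmult a p)) (Cminus (Cmult a p) (Cplus p (Cmult (RtoC (-1)) q)))); [ring|].
  assert (H0 : Cminus (Cmult a p) (Cplus p (Cmult (RtoC (-1)) q)) = RtoC 0) by (rewrite H; ring).
  rewrite H0. ring.
Qed.

Lemma cancel_help : forall c p : C, c <> RtoC 0 -> Cmult c p = RtoC 0 -> p = RtoC 0.
Proof.
  intros c p Hc H. transitivity (Cmult (Cinv c) (Cmult c p)); [field; exact Hc|].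
  rewrite H. ring.
Qed.

Lemma not_sigma_p : forall a, ~ sigma_p_Delta_adj_hdual a.
Proof.
  intros a Hn. apply Hn. clear Hn.
  intros f g [Fa [Fs [Mf HMf]]] [Ga [Gs [Mg HMg]]] Heq.
  set (psi := fun x => Cminus (f x) (g x)).
  assert (Hrel : forall x, in_hahn x -> Cmult a (psi x) = psi (Defs.Delta x)).
  { intros x Hx. specialize (Heq x Hx). unfold aImDelta_adj, Delta_adj in Heq. unfold psi.
    assert (HF : f (Defs.Delta x) = Cplus (Cminus (Cmult a (f x)) (Cmult a (g x))) (g (Defs.Delta x))).
    { transitivity (Cminus (Cmult a (f x)) (Cminus (Cmult a (f x)) (f (Defs.Delta x)))); [ring|].
      rewrite Heq. ring. }
    rewrite HF. ring. }
  assert (Padd : forall x y, in_hahn x -> in_hahn y -> psi (sadd x y) = Cplus (psi x) (psi y)).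
  { intros x y Hx Hy. unfold psi. rewrite Fa, Ga by auto. ring. }
  assert (Pscal : forall c x, in_hahn x -> psi (sscal c x) = Cmult c (psi x)).
  { intros c x Hx. unfold psi. rewrite Fs, Gs by auto. ring. }
  set (K := (Mf + Mg)%R).
  assert (Pbound : forall x, in_hahn x -> Cmod (psi x) <= K * hnorm x).
  { intros x Hx. unfold psi, Cminus, K. eapply Rle_trans; [apply Cmod_triangle|].
    rewrite Cmod_opp. specialize (HMf x Hx). specialize (HMg x Hx). lra. }
  set (KP := fun z => in_hahn z /\ psi z = RtoC 0).
  assert (Kadd : forall x y, KP x -> KP y -> KP (sadd x y)).
  { intros x y [H1 E1] [H2 E2]. split; [now apply in_hahn_add|]. rewrite Padd, E1, E2 by auto. ring. }
  assert (Kscal : forall c x, KP x -> KP (sscal c x)).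
  { intros c x [H1 E1]. split; [now apply in_hahn_scal|]. rewrite Pscal, E1 by auto. ring. }
  assert (HeS : forall n, Cmult a (psi (e (S n))) = Cplus (psi (e (S n))) (Cmult (RtoC (-1)) (psi (e n)))).
  { intros n. rewrite Hrel by apply e_hahn.
    replace (Defs.Delta (e (S n))) with (sadd (e (S n)) (sscal (RtoC (-1)) (e n))).
    - rewrite Padd, Pscal; auto using e_hahn, in_hahn_scal.
    - apply functional_extensionality; intros k. unfold Defs.Delta, sadd, sscal. rewrite eS_S. ring. }
  assert (Ke : forall n, KP (e n)).
  { intros n. split; [apply e_hahn|].
    destruct (classic (a = RtoC 1)) as [Ha|Ha].
    - rewrite (lin_help _ _ _ (HeS n)), Ha. ring.
    - assert (Ha1 : Cminus (RtoC 1) a <> RtoC 0).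
      { intros Hc. apply Ha. replace a with (Cminus (RtoC 1) (Cminus (RtoC 1) a)) by ring. rewrite Hc. ring. }
      induction n as [|n IH].
      + apply (cancel_help (Cminus (RtoC 1) a)); [exact Ha1|].
        assert (H0 : Cmult a (psi (e 0)) = psi (e 0)).
        { rewrite Hrel by apply e_hahn. f_equal. apply functional_extensionality; intros k.
          unfold Defs.Delta. rewrite e0_S. ring. }
        transitivity (Cminus (psi (e 0)) (Cmult a (psi (e 0)))); [ring|]. rewrite H0. ring.
      + apply (cancel_help (Cminus (RtoC 1) a)); [exact Ha1|].
        rewrite <- (lin_help _ _ _ (HeS n)). exact IH. }
  intros y Hy.
  assert (Hp : Cmod (psi y) = 0).
  { apply Rzero_of_small; [apply Cmod_ge_0|]. intros eps Heps.
    assert (HK1 : 0 < Rabs K + 1) by (pose proof (Rabs_pos K); lra).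
    set (eps' := eps / (Rabs K + 1)).
    assert (Heps' : 0 < eps') by (unfold eps'; apply Rdiv_lt_0_compat; lra).
    destruct (tail_small y Hy eps' Heps') as [N HN].
    assert (Hz : KP (approx y N)) by (apply (fin_ind KP Kadd Kscal Ke N); apply approx_fin).
    destruct Hz as [Hz1 Hz2].
    destruct (approx_conds y N (RtoC 1) (or_introl eq_refl)) as [C1 C2].
    set (w := fun k => Cmult (RtoC 1) (Cminus (y k) (approx y N k))) in *.
    assert (Hw : in_hahn w).
    { replace w with (sadd y (sscal (RtoC (-1)) (approx y N))).
      - apply in_hahn_add; [exact Hy|]. apply in_hahn_scal; exact Hz1.
      - apply functional_extensionality; intros k. unfold w, sadd, sscal. ring. }
    assert (Hyw : psi y = psi w).
    { replace y with (sadd (approx y N) w) at 1.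
      - rewrite Padd, Hz2 by auto. ring.
      - apply functional_extensionality; intros k. unfold w, sadd. ring. }
    destruct (HN w C1 C2) as [Hh1 Hh2].
    rewrite Hyw. eapply Rle_trans; [apply Pbound; exact Hw|].
    assert (Heq' : eps' * (Rabs K + 1) = eps) by (unfold eps'; field; lra).
    pose proof (Rle_abs K). pose proof (Rabs_pos K).
    nra. }
  assert (Hp0 : psi y = RtoC 0) by (apply Cmod_eq_0; exact Hp).
  unfold psi in Hp0.
  transitivity (Cplus (Cminus (f y) (g y)) (g y)); [ring|]. rewrite Hp0. ring.
Qed.

Theorem theorem4p5 :
  forall a : C, sigma_r_Delta_h a <-> sigma_p_Delta_adj_hdual a.
Proof.
  intros a. split; intros H.
  - exfalso; exact (not_sigma_r a H).
  - exfalso; exact (not_sigma_p a H).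
Qed.
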